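(* Assume the setting of the context. Then for all sufficiently small $\epsilon>0$ and every $\sigma\in\Sigma$ (writing $Q=Q^\epsilon_\sigma$, $D=D_{\kappa_\sigma}$), for $x\in\mathbb{R}\cup\{\infty\}$: (i) if $x\notin[0,\infty)$ then $Q\cdot(D\cdot x)\notin[\widetilde{x}_-,\infty)$; (ii) if $x\notin[\widetilde{x}_-,\infty)$ then $Q\cdot(D\cdot x)\notin[\widetilde{x}_c,\infty)$; (iii) if $Q\cdot(D\cdot x)\notin[0,\infty)$ then $x\notin[0,\widetilde{x}_+)$.
   Context: Let $(\Sigma,\mathbf{p})$ be a probability space. For each $\sigma\in\Sigma$ and $\epsilon\in[-1,1]$ let real numbers $a_\sigma,b_\sigma$, $\kappa_\sigma>0$ and $\alpha^\epsilon_\sigma,\beta^\epsilon_\sigma,\gamma^\epsilon_\sigma,\delta^\epsilon_\sigma$ be given, with $A^\epsilon_\sigma=\begin{pmatrix}\alpha^\epsilon_\sigma&\beta^\epsilon_\sigma\\ \gamma^\epsilon_\sigma&\delta^\epsilon_\sigma\end{pmatrix}$. Assume that for all $\sigma$: $|\log(\kappa_\sigma)|\le C_0$, $a_\sigma-|b_\sigma|\ge C_1$, $a_\sigma+|b_\sigma|\le C_2$, and $\|A^\epsilon_\sigma\|\le C_3$ for $|\epsilon|\le1$, with constants $C_0,C_1,C_2,C_3\in(0,\infty)$. On $\mathbb{R}\cup\{\infty\}$ define $D_{\kappa}\cdot x=\kappa^2x$ and $$Q^\epsilon_\sigma\cdot x=\frac{(1+\epsilon^2\alpha^\epsilon_\sigma)x+(a_\sigma-b_\sigma-\epsilon\beta^\epsilon_\sigma)\epsilon}{1+\epsilon^2\delta^\epsilon_\sigma-(a_\sigma+b_\sigma+\epsilon\gamma^\epsilon_\sigma)\epsilon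 x}.$$ Let $\lambda=\lambda(\epsilon)>0$ be a function of $\epsilon>0$ with $\lim_{\epsilon\to0}\lambda=0$ and $\lim_{\epsilon\to0}\frac{\log(\lambda)}{\log(\epsilon)}=0$, and set $\Lambda=e^{2C_0\lambda}$. Put $A=\Lambda(C_2+C_3\epsilon)\epsilon$, $B=\Lambda-1-C_3\epsilon^2(\Lambda+1)$, $C=(C_2+C_3\epsilon)\epsilon$, and $$\widetilde{x}_-=e^{2C_0}\frac{(B^2+4AC)\,C}{B^3},\qquad \widetilde{x}_+=e^{-2C_0}\frac{B^2-2AC}{AB},\qquad \widetilde{x}_c=e^{2C_0}\Lambda\,\widetilde{x}_-.$$ *)

(* Defs.v *)
From Stdlib Require Import Reals.
From Coquelicot Require Import Coquelicot.
Open Scope R_scope.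

(* The real projective line R ∪ {∞}: [Some y] is the real y, [None] is ∞. *)
Definition projR := option R.

Definition in_Ici (a : R) (x : projR) : Prop :=
  match x with Some y => a <= y | None => False end.

Definition in_Ico (a b : R) (x : projR) : Prop :=
  match x with Some y => a <= y < b | None => False end.

Definition mobius (p q r s : R) (x : projR) : projR :=
  match x with
  | Some y => if Req_EM_T (r * y + s) 0 then None else Some ((p * y + q) / (r * y + s))
  | None => if Req_EM_T r 0 then None else Some (p / r)
  end.

Definition Dact (kappa : R) (x : projR) : projR :=
  match x with Some y => Some (kappa ^ 2 * y) | None => None end.

Definition Qact (eps a b alpha beta gamma delta : R) (x : projR) : projR :=
  mobius (1 + eps ^ 2 * alpha) ((a - b - eps * beta) * eps)
         (- ((a + b + eps * gamma) * eps)) (1 + eps ^ 2 * delta) x.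

(* Operator (spectral) norm of the 2x2 matrix [[α, β], [γ, δ]]:
   square root of the largest eigenvalue of A^T A. *)
Definition opnorm2 (alpha beta gamma delta : R) : R :=
  let s := alpha ^ 2 + beta ^ 2 + gamma ^ 2 + delta ^ 2 in
  let d := alpha * delta - beta * gamma in
  sqrt ((s + sqrt (s ^ 2 - 4 * d ^ 2)) / 2).

Definition bigLambda (C0 lam : R) : R := exp (2 * C0 * lam).
Definition qA (C0 C2 C3 lam eps : R) : R := bigLambda C0 lam * (C2 + C3 * eps) * eps.
Definition qB (C0 C3 lam eps : R) : R :=
  bigLambda C0 lam - 1 - C3 * eps ^ 2 * (bigLambda C0 lam + 1).
Definition qC (C2 C3 eps : R) : R := (C2 + C3 * eps) * eps.

Definition xt_minus (C0 C2 C3 lam eps : R) : R :=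
  let A := qA C0 C2 C3 lam eps in
  let B := qB C0 C3 lam eps in
  let C := qC C2 C3 eps in
  exp (2 * C0) * ((B ^ 2 + 4 * A * C) * C) / B ^ 3.
Definition xt_plus (C0 C2 C3 lam eps : R) : R :=
  let A := qA C0 C2 C3 lam eps in
  let B := qB C0 C3 lam eps in
  let C := qC C2 C3 eps in
  exp (- (2 * C0)) * (B ^ 2 - 2 * A * C) / (A * B).
Definition xt_c (C0 C2 C3 lam eps : R) : R :=
  exp (2 * C0) * bigLambda C0 lam * xt_minus C0 C2 C3 lam eps.

(* Main.v *)
Require Import Defs.
From Stdlib Require Import Reals Lra Psatz.
From Coquelicot Require Import Coquelicot.
Open Scope R_scope.

Lemma div_lt_helper u v w : 0 < v -> u < w * v -> u / v < w.
Proof. intros Hv H. apply (Rmult_lt_reg_r v); auto. unfold Rdiv. rewrite Rmult_assoc, Rinv_l; lra. Qed.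

Lemma div_le0 u v : 0 <= u -> 0 < v -> 0 <= u / v.
Proof. intros. unfold Rdiv. apply Rmult_le_pos; [lra|left; apply Rinv_0_lt_compat; lra]. Qed.

Lemma core (C0 C1 C2 C3 e l L K0 a b al be ga de : R) :
 0<C0 -> 0<C1 -> 0<C2 -> 0<C3 -> 0<e -> e < l*l -> 0<l -> l <= 1 -> C3*l <= C1/2 -> C3*l <= 1/2 ->
 5/2*C3*l <= C0 ->
 3/2*(C2+C3)^2*l <= (K0^2-1)/(2*K0^4)*C0^2 -> 1 + 2*C0*l <= L -> L <= 3/2 -> 1 < K0 ->
 -C3 <= al <= C3 -> -C3 <= be <= C3 -> -C3 <= ga <= C3 -> -C3 <= de <= C3 ->
 C1 <= a - b <= C2 -> C1 <= a + b <= C2 ->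
 let p := 1 + e^2*al in let q := (a - b - e*be)*e in let r := -((a+b+e*ga)*e) in
 let s := 1 + e^2*de in
 let A := L*(C2+C3*e)*e in let B := L - 1 - C3*e^2*(L+1) in let C := (C2+C3*e)*e in
 let xm := K0 * ((B^2+4*A*C)*C)/B^3 in
 (r <> 0 /\ p/r < xm) /\
 (forall y, y < 0 -> r*y+s <> 0 /\ (p*y+q)/(r*y+s) < xm) /\
 xm <= K0*L*xm /\
 (forall y, 0 <= y -> y < K0*xm -> r*y+s <> 0 /\ (p*y+q)/(r*y+s) < K0*L*xm) /\
 (forall y, 0 <= y -> y < (B^2-2*A*C)/(A*B) -> r*y+s <> 0 /\ 0 <= (p*y+q)/(r*y+s)).
Proof.
intros hC0 hC1 hC2 hC3 he hel hl hl1 h1 h2 h3 h4 hL1 hL2 hK0 hal hbe hga hde hab hab'.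
intros p q r s A B C xm.
assert (el : e <= l) by nra.
assert (e1 : e <= 1) by lra.
assert (hCe : C3*e <= C1/2) by nra.
assert (hCe2 : C3*e^2 <= 1/2) by nra.
assert (hp : 1 - C3*e^2 <= p <= 1 + C3*e^2) by (unfold p; split; nra).
assert (hs : 1 - C3*e^2 <= s <= 1 + C3*e^2) by (unfold s; split; nra).
assert (hq1 : C1/2 <= a - b - e*be <= C2 + C3*e) by (split; nra).
assert (hr1 : C1/2 <= a + b + e*ga <= C2 + C3*e) by (split; nra).
assert (hq : 0 < q <= C) by (unfold q, C; split; nra).
assert (hr : 0 < -r <= C) by (unfold r, C; split; nra).
assert (hC : 0 < C) by lra.
assert (hA : A = L*C) by (unfold A, C; ring).
assert (hL0 : 0 < L) by nra.
assert (hApos : 0 < A) by (rewrite hA; nra).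
assert (hB : C0*l <= B).
{ assert (C3*e^2*(L+1) <= 5/2*C3*e^2) by nra.
  assert (C3*e^2 <= C3*e) by nra.
  assert (5/2*C3*e <= 5/2*C3*l*l) by nra.
  assert (5/2*C3*l*l <= C0*l) by nra.
  unfold B; nra. }
assert (hBpos : 0 < B) by nra.
assert (hB2 : B <= L - 1) by (unfold B; nra).
assert (hCC : C <= (C2+C3)*e) by (unfold C; nra).
set (K := K0^2).
set (T := (K-1)/(2*K^2)).
assert (hK : 1 < K) by (unfold K; nra).
assert (hT : T * (2*K^2) = K - 1) by (unfold T; field; lra).
assert (hK4 : K0^4 = K^2) by (unfold K; ring).
assert (h4' : 3/2*(C2+C3)^2*l <= T*C0^2) by (unfold T, K; replace ((K0^2)^2) with (K0^4) by ring; exact h4).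
clear h4. rename h4' into h4.
assert (hAC : A*C <= T*B^2).
{ assert (C*C <= ((C2+C3)*e)*((C2+C3)*e)) by (apply Rmult_le_compat; lra).
  assert (((C2+C3)*e)*((C2+C3)*e) <= ((C2+C3)*(l*l))*((C2+C3)*(l*l))) by (apply Rmult_le_compat; nra).
  assert (C*C <= (C2+C3)^2*(l*l)*(l*l)) by nra.
  assert (0 <= T) by nra.
  assert (A*C <= 3/2*(C2+C3)^2*(l*l)*(l*l)) by (rewrite hA; nra).
  assert (3/2*(C2+C3)^2*(l*l)*(l*l) <= 3/2*(C2+C3)^2*l*(l*l)).
  { assert (0 <= 3/2*(C2+C3)^2*(l*l)) by nra. nra. }
  assert (3/2*(C2+C3)^2*l*(l*l) <= T*C0^2*(l*l)) by (apply Rmult_le_compat_r; nra).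
  assert ((C0*l)*(C0*l) <= B*B) by (apply Rmult_le_compat; nra).
  assert (T*C0^2*(l*l) <= T*B^2) by (replace (T*C0^2*(l*l)) with (T*((C0*l)*(C0*l))) by ring; replace (T*B^2) with (T*(B*B)) by ring; apply Rmult_le_compat_l; lra).
  lra. }
set (t := A*C/B^2).
assert (ht0 : 0 < t) by (unfold t; apply Rdiv_lt_0_compat; nra).
assert (htT : t <= T).
{ unfold t. apply Rmult_le_reg_r with (B^2); [nra|]. replace (A*C/B^2*B^2) with (A*C) by (field; lra). exact hAC. }
assert (hxm : xm = K0*C*(1+4*t)/B) by (unfold xm, t; field; lra).
assert (hxmC : C/B < xm).
{ assert (hCB : 0 < C/B) by (apply Rdiv_lt_0_compat; lra).
  rewrite hxm. replace (K0*C*(1+4*t)/B) with ((K0*(1+4*t))*(C/B)) by (field; lra).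
  assert (1 < K0*(1+4*t)) by nra. nra. }
assert (hCB : 0 < C/B) by (apply Rdiv_lt_0_compat; lra).
assert (hxm0 : 0 < xm) by lra.
assert (hqs : q < xm*s).
{ assert (C/B*B <= C/B*s) by (apply Rmult_le_compat_l; nra).
  replace (C/B*B) with C in H by (field; lra). nra. }
split.
{ split. lra. apply Rlt_trans with 0; [|lra].
  replace (p/r) with (- (p / (-r))) by (field; lra).
  assert (0 < p/(-r)) by (apply Rdiv_lt_0_compat; lra). lra. }
assert (Hneg : forall y, y < 0 -> r*y+s <> 0 /\ (p*y+q)/(r*y+s) < xm).
{ intros y hy. assert (0 < r*y+s) by nra. split. lra.
  apply div_lt_helper. lra.
  assert (0 < p - xm*r) by nra.
  assert ((p - xm*r)*y < 0) by (apply Rmult_pos_neg; lra). nra. }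
split. exact Hneg.
split. { assert (1 <= K0*L) by nra. nra. }
split.
{ set (Y := K0*xm).
  assert (hY : Y = K*C*(1+4*t)/B) by (unfold Y, K; rewrite hxm; field; lra).
  assert (hY0 : 0 < Y) by (unfold Y; nra).
  assert (hpoly : A*Y^2 - B*Y + C = C*(K^2*t*(1+4*t)^2 - K*(1+4*t) + 1)).
  { rewrite hY. unfold t. field. lra. }
  assert (hbr : K^2*t*(1+4*t)^2 - K*(1+4*t) + 1 <= 0).
  { assert (2*K^2*t <= K - 1) by (rewrite <- hT; assert (0 < 2*K^2) by nra; nra).
    assert (8*(K-1) <= 2*K^2) by (assert (0 <= (K-2)^2) by apply pow2_ge_0; nra).
    assert (16*K^2*t <= 2*K^2*1) by nra.
    assert (t <= 1/8) by (assert (0 < K^2) by nra; nra).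
    set (u := 1+4*t). assert (1 <= u <= 2) by (unfold u; lra).
    assert (K^2*t*u^2 <= u*(2*K^2*t)) by (assert (0 <= K^2*t) by nra; assert (0 <= K^2*t*u*(2-u)) by (apply Rmult_le_pos; [apply Rmult_le_pos|]; lra); replace (u*(2*K^2*t)) with (K^2*t*u^2 + K^2*t*u*(2-u)) by ring; lra).
    nra. }
  assert (hq2 : A*Y^2 - B*Y + C <= 0) by (rewrite hpoly; nra).
  assert (hkey : p*Y + q <= L*Y*(s + r*Y)).
  { assert (0 <= (r + C)*(L*Y^2)) by (apply Rmult_le_pos; [lra| apply Rmult_le_pos; [lra| apply pow2_ge_0]]).
    assert (L*r*Y^2 >= - A*Y^2) by (rewrite hA; nra).
    assert (0 <= (s - (1-C3*e^2))*(L*Y)) by (apply Rmult_le_pos; [lra| apply Rmult_le_pos; lra]).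
    assert (L*Y*s >= L*(1-C3*e^2)*Y) by nra.
    assert (0 <= ((1+C3*e^2) - p)*Y) by (apply Rmult_le_pos; lra).
    assert (p*Y <= (1+C3*e^2)*Y) by nra.
    unfold B in hq2. nra. }
  assert (hsY : 0 < s + r*Y).
  { destruct (Rle_or_lt (s + r*Y) 0) as [H|H]; [|exact H].
    assert (0 < p*Y + q) by (assert (0 < p*Y) by (apply Rmult_lt_0_compat; lra); lra).
    assert (0 <= (L*Y)*(-(s+r*Y))) by (apply Rmult_le_pos; [apply Rmult_le_pos|]; lra).
    lra. }
  intros y hy0 hy. assert (0 < r*y+s) by nra. split. lra.
  apply div_lt_helper. lra.
  replace (K0*L*xm) with (L*Y) by (unfold Y; ring).
  assert (0 < L*Y*(-r)) by (apply Rmult_lt_0_compat; [apply Rmult_lt_0_compat|]; lra).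
  assert (0 < (p - L*Y*r)*(Y - y)) by (apply Rmult_lt_0_compat; lra).
  lra. }
intros y hy0 hy.
assert (hZ : C*((B^2-2*A*C)/(A*B)) = B/L - 2*C^2/B) by (rewrite hA; field; lra).
assert (hBL : B/L < 1 - C3*e^2).
{ apply div_lt_helper. lra. nra. }
assert (0 <= C^2/B) by (apply div_le0; nra).
assert (C*y < C*((B^2-2*A*C)/(A*B))) by (apply Rmult_lt_compat_l; lra).
assert (0 < r*y+s) by nra.
split. lra. apply div_le0; nra.
Qed.
Lemma entry_gen x y z w S d : S = x^2+y^2+z^2+w^2 -> d^2 = (x*w-y*z)^2 ->
  x^2 <= (S + sqrt (S^2 - 4*d^2))/2.
Proof.
intros HS Hd.
assert (hsq := sqrt_pos (S^2 - 4*d^2)).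
destruct (Rle_or_lt (2*x^2 - S) 0) as [H|H]; [lra|].
set (R0 := y^2+z^2+w^2).
assert (hR : x^2 - R0 = 2*x^2 - S) by (unfold R0; rewrite HS; ring).
assert (hxR : R0 <= x^2) by lra.
assert (hcs : (x*w-y*z)^2 + (x*z+y*w)^2 = (x^2+y^2)*(z^2+w^2)) by ring.
assert (0 <= (x*z+y*w)^2) by apply pow2_ge_0.
assert (0 <= y^2*(x^2 - z^2 - w^2)) by (apply Rmult_le_pos; [apply pow2_ge_0| unfold R0 in hxR; assert (0<=y^2) by apply pow2_ge_0; lra]).
assert (hd2 : d^2 <= x^2*R0) by (rewrite Hd; unfold R0; nra).
assert (hle : (2*x^2 - S)^2 <= S^2 - 4*d^2).
{ rewrite <- hR. replace S with (x^2 + R0) by (unfold R0; rewrite HS; ring). nra. }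
assert (Hs : sqrt ((2*x^2 - S)^2) <= sqrt (S^2 - 4*d^2)) by (apply sqrt_le_1_alt; exact hle).
rewrite sqrt_pow2 in Hs; lra.
Qed.

Lemma entry_bound x y z w S d C3 : S = x^2+y^2+z^2+w^2 -> d^2 = (x*w-y*z)^2 ->
  sqrt ((S + sqrt (S^2 - 4*d^2))/2) <= C3 -> -C3 <= x <= C3.
Proof.
intros HS Hd H.
assert (h := entry_gen x y z w S d HS Hd).
set (V := (S + sqrt (S^2 - 4*d^2))/2) in *.
assert (0 <= x^2) by apply pow2_ge_0.
assert (hV : sqrt V ^ 2 = V) by (apply pow2_sqrt; lra).
assert (0 <= sqrt V) by apply sqrt_pos.
nra.
Qed.

Lemma ball0_iff (eps : posreal) (z : R) : ball 0 eps z <-> Rabs z < eps.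
Proof. unfold ball. simpl. unfold AbsRing_ball, abs, minus, plus, opp. simpl.
rewrite Ropp_0, Rplus_0_r. tauto. Qed.

Lemma exp_le' x y : x <= y -> exp x <= exp y.
Proof. intros [H|H]; [left; apply exp_increasing; exact H| subst; lra]. Qed.

Lemma le_div_mul l u v : 0 < v -> l <= u / v -> l * v <= u.
Proof. intros hv h. apply Rmult_le_compat_r with (r := v) in h; [|lra].
  unfold Rdiv in h. rewrite Rmult_assoc, Rinv_l in h; lra. Qed.

Lemma lt_loc (c : R) (hc : 0 < c) : locally 0 (fun z => z < c).
Proof. apply (open_lt c 0). exact hc. Qed.

Theorem lemma7
  (Sigma : Type)
  (a b kappa : Sigma -> R)
  (alpha beta gamma delta : R -> Sigma -> R)
  (C0 C1 C2 C3 : R)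
  (hC0 : 0 < C0) (hC1 : 0 < C1) (hC2 : 0 < C2) (hC3 : 0 < C3)
  (hkappa_pos : forall s, 0 < kappa s)
  (hkappa : forall s, Rabs (ln (kappa s)) <= C0)
  (hab1 : forall s, a s - Rabs (b s) >= C1)
  (hab2 : forall s, a s + Rabs (b s) <= C2)
  (hA : forall s eps, Rabs eps <= 1 ->
          opnorm2 (alpha eps s) (beta eps s) (gamma eps s) (delta eps s) <= C3)
  (lam : R -> R)
  (hlam_pos : forall eps, 0 < eps -> 0 < lam eps)
  (hlam0 : filterlim lam (at_right 0) (locally 0))
  (hlamlog : filterlim (fun eps => ln (lam eps) / ln eps) (at_right 0) (locally 0)) :
  exists eps0, 0 < eps0 /\
    forall eps, 0 < eps < eps0 -> forall (s : Sigma) (x : projR),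
      let Q := Qact eps (a s) (b s) (alpha eps s) (beta eps s) (gamma eps s) (delta eps s) in
      let D := Dact (kappa s) in
      let xm := xt_minus C0 C2 C3 (lam eps) eps in
      let xp := xt_plus C0 C2 C3 (lam eps) eps in
      let xc := xt_c C0 C2 C3 (lam eps) eps in
      (~ in_Ici 0 x -> ~ in_Ici xm (Q (D x))) /\
      (~ in_Ici xm x -> ~ in_Ici xc (Q (D x))) /\
      (~ in_Ici 0 (Q (D x)) -> ~ in_Ico 0 xp x).
Proof.
set (K0 := exp (2*C0)).
assert (hK0 : 1 < K0) by (unfold K0; assert (h := exp_ineq1 (2*C0) ltac:(lra)); lra).
set (T := (K0^2-1)/(2*K0^4)).
assert (hT : 0 < T).
{ unfold T. assert (1 < K0^2) by nra. replace (K0^4) with (K0^2*K0^2) by ring.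
  apply Rdiv_lt_0_compat; nra. }
assert (hln : 0 < ln (3/2)) by (rewrite <- ln_1; apply ln_increasing; lra).
set (eta := Rmin 1 (Rmin (C1/(2*C3)) (Rmin (1/(2*C3)) (Rmin (ln (3/2)/(2*C0))
             (Rmin (2*C0/(5*C3)) (2*T*C0^2/(3*(C2+C3)^2))))))).
assert (heta : 0 < eta).
{ unfold eta. assert (0 < (C2+C3)^2) by nra. assert (0 < C0^2) by nra. assert (0 < T*C0^2) by (apply Rmult_lt_0_compat; lra).
  repeat apply Rmin_pos; try lra; apply Rdiv_lt_0_compat; nra. }
assert (he1 : eta <= 1) by apply Rmin_l.
assert (he2 : eta <= C1/(2*C3)) by (eapply Rle_trans; [apply Rmin_r|apply Rmin_l]).
assert (he3 : eta <= 1/(2*C3)) by (eapply Rle_trans; [apply Rmin_r|]; eapply Rle_trans; [apply Rmin_r|apply Rmin_l]).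
assert (he4 : eta <= ln (3/2)/(2*C0)) by (do 3 (eapply Rle_trans; [apply Rmin_r|]); apply Rmin_l).
assert (he5 : eta <= 2*C0/(5*C3)) by (do 4 (eapply Rle_trans; [apply Rmin_r|]); apply Rmin_l).
assert (he6 : eta <= 2*T*C0^2/(3*(C2+C3)^2)) by (do 5 (eapply Rle_trans; [apply Rmin_r|]); apply Rle_refl).
assert (F1 : at_right 0 (fun e => lam e < eta)) by exact (hlam0 (fun z => z < eta) (lt_loc eta heta)).
assert (F2 : at_right 0 (fun e => ln (lam e) / ln e < 1/2)) by exact (hlamlog (fun z => z < 1/2) (lt_loc (1/2) ltac:(lra))).
assert (F3 : at_right 0 (fun e : R => e < 1)).
{ unfold at_right, within. apply filter_imp with (P := fun z => z < 1).
  intros z hz _; exact hz. apply lt_loc; lra. }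
destruct (filter_and _ _ F1 (filter_and _ _ F2 F3)) as [del Hdel].
exists del. split. apply cond_pos.
intros e [he hed] s x.
assert (Hball : ball 0 del e) by (apply (proj2 (ball0_iff del e)); rewrite Rabs_pos_eq; lra).
destruct (Hdel e Hball he) as [hl1 [hl2 he1']].
set (l := lam e) in *.
assert (hl : 0 < l) by (apply hlam_pos; exact he).
assert (hlne : ln e < 0) by (rewrite <- ln_1; apply ln_increasing; lra).
assert (hel : e < l*l).
{ apply ln_lt_inv; try nra. rewrite ln_mult; try lra.
  assert (ln l / ln e * ln e = ln l) by (field; lra).
  assert (ln l / ln e * ln e > 1/2 * ln e) by (apply Rmult_lt_gt_compat_neg_l with (r := ln e) in hl2; lra).
  lra. }
assert (c1 : l <= 1) by lra.
assert (c2 : C3*l <= C1/2).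
{ assert (l <= C1/(2*C3)) by lra. apply le_div_mul in H; [|lra]. lra. }
assert (c3 : C3*l <= 1/2).
{ assert (l <= 1/(2*C3)) by lra. apply le_div_mul in H; [|lra]. lra. }
assert (c4 : 5/2*C3*l <= C0).
{ assert (l <= 2*C0/(5*C3)) by lra. apply le_div_mul in H; [|lra]. lra. }
assert (c5 : 3/2*(C2+C3)^2*l <= T*C0^2).
{ assert (l <= 2*T*C0^2/(3*(C2+C3)^2)) by lra. apply le_div_mul in H; [|nra]. lra. }
assert (c6 : 2*C0*l <= ln (3/2)).
{ assert (l <= ln (3/2)/(2*C0)) by lra. apply le_div_mul in H; [|lra]. lra. }
set (L := bigLambda C0 l).
assert (hL1 : 1 + 2*C0*l <= L) by (unfold L, bigLambda; left; apply exp_ineq1; nra).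
assert (hL2 : L <= 3/2) by (unfold L, bigLambda; rewrite <- (exp_ln (3/2)) by lra; apply exp_le'; lra).
assert (hAe := hA s e ltac:(rewrite Rabs_pos_eq; lra)).
unfold opnorm2 in hAe. cbv zeta in hAe.
set (al := alpha e s) in *. set (be := beta e s) in *. set (ga := gamma e s) in *. set (de := delta e s) in *.
set (SS := al ^ 2 + be ^ 2 + ga ^ 2 + de ^ 2) in hAe.
set (dd := al * de - be * ga) in hAe.
assert (hal := entry_bound al be ga de SS dd C3 eq_refl eq_refl hAe).
assert (hbe := entry_bound be al de ga SS dd C3 ltac:(unfold SS; ring) ltac:(unfold dd; ring) hAe).
assert (hga := entry_bound ga de al be SS dd C3 ltac:(unfold SS; ring) ltac:(unfold dd; ring) hAe).
assert (hde := entry_bound de ga be al SS dd C3 ltac:(unfold SS; ring) ltac:(unfold dd; ring) hAe).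
assert (hb1 := Rle_abs (b s)). assert (hb2 := Rle_abs (- b s)). rewrite Rabs_Ropp in hb2.
assert (hab := hab1 s). assert (hab' := hab2 s).
assert (hk : kappa s ^ 2 <= K0).
{ assert (hk1 := hkappa s). assert (hk2 := Rle_abs (ln (kappa s))).
  rewrite <- (exp_ln (kappa s)) by apply hkappa_pos.
  replace (exp (ln (kappa s)) ^ 2) with (exp (ln (kappa s) + ln (kappa s))) by (rewrite exp_plus; ring).
  unfold K0; apply exp_le'; lra. }
assert (hk0 : 0 < kappa s ^ 2) by (assert (h := hkappa_pos s); nra).
destruct (core C0 C1 C2 C3 e l L K0 (a s) (b s) al be ga de hC0 hC1 hC2 hC3 he hel hl c1 c2 c3 c4
  ltac:(fold T; exact c5) hL1 hL2 hK0 hal hbe hga hde ltac:(lra) ltac:(lra))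
  as [k1 [k2 [k3 [k4 k5]]]].
intros Q D xm xp xc.
unfold Q, D, xm, xp, xc, Qact, Dact, mobius, xt_minus, xt_plus, xt_c, qA, qB, qC in *.
fold L. fold K0.
unfold xt_minus, qA, qB, qC. fold L. fold K0.
set (B := L - 1 - C3 * e ^ 2 * (L + 1)) in *.
set (A := L * (C2 + C3 * e) * e) in *.
set (C := (C2 + C3 * e) * e) in *.
set (XM := K0 * ((B^2 + 4*A*C)*C)/B^3) in *.
set (p := 1 + e^2*al) in *.
set (q := (a s - b s - e * be) * e) in *.
set (r := - ((a s + b s + e * ga) * e)) in *.
set (ss := 1 + e ^ 2 * de) in *.
assert (hKE : K0 * exp (-(2*C0)) = 1) by (unfold K0; rewrite exp_Ropp; field; apply Rgt_not_eq, exp_pos).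
set (N := B^2 - 2*A*C) in *.
assert (hxp : K0 * (exp (-(2*C0)) * N / (A*B)) = N/(A*B)).
{ unfold Rdiv. replace (K0 * (exp (-(2*C0)) * N * / (A*B))) with ((K0*exp(-(2*C0))) * N * /(A*B)) by ring.
  rewrite hKE; ring. }
destruct x as [y0|]; cbv beta iota.
- set (y := kappa s ^ 2 * y0).
  destruct (Req_dec_T (r * y + ss) 0) as [hz|hz]; cbv beta iota; unfold in_Ici, in_Ico.
  + split; [intros _ hF; exact hF|split; [intros _ hF; exact hF|]].
    intros _ [h0 h1]. assert (0 <= y) by (unfold y; apply Rmult_le_pos; lra).
    assert (y <= K0*y0) by (unfold y; apply Rmult_le_compat_r; lra).
    assert (K0*y0 < K0 * (exp (-(2*C0)) * N / (A*B))) by (apply Rmult_lt_compat_l; lra).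
    destruct (k5 y) as [k _]; [lra|lra|]. exact (k hz).
  + split; [|split].
    * intros h0. assert (y < 0) by (unfold y; nra). destruct (k2 y) as [_ k]; [lra|]. lra.
    * intros h0. destruct (Rlt_or_le y0 0) as [hn|hn].
      -- assert (y < 0) by (unfold y; nra). destruct (k2 y) as [_ k]; [lra|]. lra.
      -- assert (0 <= y) by (unfold y; apply Rmult_le_pos; lra).
         assert (y <= K0*y0) by (unfold y; apply Rmult_le_compat_r; lra).
         assert (K0*y0 < K0 * XM) by (apply Rmult_lt_compat_l; lra).
         destruct (k4 y) as [_ k]; [lra|lra|]. lra.
    * intros H1 [h0 h1]. apply H1.
      assert (0 <= y) by (unfold y; apply Rmult_le_pos; lra).
      assert (y <= K0*y0) by (unfold y; apply Rmult_le_compat_r; lra).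
      assert (K0*y0 < K0 * (exp (-(2*C0)) * N / (A*B))) by (apply Rmult_lt_compat_l; lra).
      destruct (k5 y) as [_ k]; [lra|lra|]. exact k.
- destruct (Req_dec_T r 0) as [hz|hz]; cbv beta iota; unfold in_Ici, in_Ico.
  + destruct k1 as [k _]. exfalso; exact (k hz).
  + destruct k1 as [_ k]. split; [lra|split; [lra|tauto]].
Qed.
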